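(* Let $\alpha\in(0,1]$, $k\ge1$ an integer, and $\beta=1-(1-\alpha)^{1/k}$. Let $\mathcal{F}$ be a finite family of convex sets in $\mathbb{R}^d$ with $|\mathcal{F}|\ge k$, and let $b\in\mathbb{R}^d$. Assume that for at least an $\alpha$ fraction of the $k$-element subfamilies $\{K_1,\dots,K_k\}\subseteq\mathcal{F}$, the set $\bigcap_{i=1}^kK_i$ has a point in $B(b,1)$. Then there is $q\in\mathbb{R}^d$ such that at least $\beta|\mathcal{F}|$ elements of $\mathcal{F}$ intersect the ball $B(q,1/\sqrt k)$.
   Context: $B(p,\rho)$ is the closed Euclidean ball of centre $p$ and radius $\rho$. *)

(* Defs.v *)
From HB Require Import structures.
From mathcomp Require Import all_boot all_order all_algebra.
From mathcomp Require Import all_classical all_reals all_analysis.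
Set Implicit Arguments. Unset Strict Implicit. Unset Printing Implicit Defensive.
Import Order.TTheory GRing.Theory Num.Theory.
Local Open Scope classical_set_scope.
Local Open Scope ring_scope.

Definition enorm (R : realType) (d : nat) (x : 'rV[R]_d) : R :=
  Num.sqrt (\sum_(i < d) x ord0 i ^+ 2).

Definition cball (R : realType) (d : nat) (p : 'rV[R]_d) (rho : R)
  : set 'rV[R]_d := [set x | enorm (x - p) <= rho].

(* Main.v *)
Require Import Defs.
From HB Require Import structures.
From mathcomp Require Import all_boot all_order all_algebra.
From mathcomp Require Import all_classical all_reals all_analysis.
From mathcomp Require Import ring lra zify.
Import Order.TTheory GRing.Theory Num.Theory.
Import numFieldTopology.Exports numFieldNormedType.Exports.
Local Open Scope classical_set_scope.
Local Open Scope ring_scope.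
Set Implicit Arguments. Unset Strict Implicit. Unset Printing Implicit Defensive.

Lemma convex_mem (R : realType) d (C : set 'rV[R]_d) x y (t : R) : convex_set C -> C x -> C y ->
  0 <= t -> t <= 1 -> C (t *: x + (1 - t) *: y).
Proof.
move=> cC Cx Cy t0 t1.
have := cC x y (Itv01 t0 t1); rewrite !inE => /(_ Cx Cy).
by [].
Qed.

Lemma sum_seq_eq0 (R : realType) (I : eqType) (s : seq I) (lam : I -> R) :
  (forall j, 0 <= lam j) -> \sum_(j <- s) lam j = 0 -> forall j, j \in s -> lam j = 0.
Proof.
move=> h; elim: s => [|a s IH] //=; rewrite big_cons => hs j.
have h1 : 0 <= \sum_(j <- s) lam j by apply: sumr_ge0.
have ha : lam a = 0 by have := h a; lra.
have hr : \sum_(j <- s) lam j = 0 by have := h a; lra.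
rewrite inE => /orP[/eqP -> //|js]; exact: IH.
Qed.

Lemma convex_comb_seq (R : realType) d m (F : set 'rV[R]_d) (w : 'I_m -> 'rV[R]_d)
  (s : seq 'I_m) (lam : 'I_m -> R) : convex_set F -> (forall j, 0 <= lam j) ->
  \sum_(j <- s) lam j = 1 -> (forall j, j \in s -> lam j != 0 -> F (w j)) ->
  F (\sum_(j <- s) lam j *: w j).
Proof.
move=> cF; elim: s lam => [|a s IH] lam h0; first by rewrite big_nil => /esym/eqP; rewrite oner_eq0.
rewrite !big_cons => hs hF.
have hr0 : 0 <= \sum_(j <- s) lam j by apply: sumr_ge0.
have [la0|la0] := eqVneq (lam a) 0.
  rewrite la0 scale0r add0r; apply: IH => //; first by move: hs; rewrite la0 add0r.
  by move=> j js; apply: hF; rewrite inE js orbT.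
have Fa : F (w a) by apply: hF => //; rewrite inE eqxx.
have [la1|la1] := eqVneq (lam a) 1.
  have hr : \sum_(j <- s) lam j = 0 by move: hs; rewrite la1; lra.
  rewrite la1 scale1r big1_seq ?addr0 // => j /andP[_ js].
  by rewrite (@sum_seq_eq0 _ _ s lam h0 hr j js) scale0r.
have lt1 : lam a < 1.
  by rewrite lt_neqAle la1 /= -hs lerDl.
set t := lam a.
have t1 : 0 < 1 - t.
  by rewrite subr_gt0.
pose lam' j := lam j / (1 - t).
have Fy : F (\sum_(j <- s) lam' j *: w j).
  apply: IH.
  - by move=> j; rewrite /lam' divr_ge0 // ltW.
  - rewrite /lam' -mulr_suml.
    have -> : \sum_(j <- s) lam j = 1 - t by rewrite /t; lra.
    by rewrite divff // gt_eqF.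
  - move=> j js; rewrite /lam' mulf_eq0 negb_or => /andP[hj _]; apply: hF => //.
    by rewrite inE js orbT.
have -> : \sum_(j <- s) lam j *: w j = (1 - t) *: \sum_(j <- s) lam' j *: w j.
  rewrite scaler_sumr; apply: eq_bigr => j _; rewrite scalerA /lam' mulrC mulfVK //.
  by rewrite gt_eqF.
apply: convex_mem => //; [exact: h0|exact: ltW].
Qed.

Section Eucl.
Variables (R : realType) (d : nat).
Local Notation V := 'rV[R]_d.

Definition sq (x : V) : R := \sum_(i < d) x ord0 i ^+ 2.
Definition dot (x y : V) : R := \sum_(i < d) x ord0 i * y ord0 i.

Lemma sq_ge0 x : 0 <= sq x.
Proof. by apply: sumr_ge0 => i _; rewrite sqr_ge0. Qed.

Lemma sqD x y : sq (x + y) = sq x + 2 * dot x y + sq y.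
Proof.
rewrite /sq /dot mulr_sumr -!big_split /=; apply: eq_bigr => i _.
rewrite !mxE; ring.
Qed.

Lemma sqZ t x : sq (t *: x) = t ^+ 2 * sq x.
Proof. rewrite /sq mulr_sumr; apply: eq_bigr => i _; rewrite !mxE; ring. Qed.

Lemma dotZr t x y : dot x (t *: y) = t * dot x y.
Proof. rewrite /dot mulr_sumr; apply: eq_bigr => i _; rewrite !mxE; ring. Qed.

Lemma proj_ineq (C : set V) b p x : convex_set C -> C p -> C x ->
  (forall y, C y -> sq (p - b) <= sq (y - b)) ->
  sq (x - p) <= sq (x - b) - sq (p - b).
Proof.
move=> cC Cp Cx pmin.
set u := dot (p - b) (x - p); set s := sq (x - p).
have key t : 0 <= t -> t <= 1 -> 0 <= 2 * t * u + t ^+ 2 * s.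
  move=> t0 t1; have := pmin _ (@convex_mem R d C x p t cC Cx Cp t0 t1).
  have -> : t *: x + (1 - t) *: p - b = (p - b) + t *: (x - p).
    by apply/rowP => i; rewrite !mxE; ring.
  rewrite (sqD (p - b)) sqZ dotZr -/u -/s; lra.
have u0 : 0 <= u.
  rewrite leNgt; apply/negP => u0.
  have s0 : 0 <= s by exact: sq_ge0.
  have su : 0 < s - u by lra.
  pose r := - u / (s - u).
  have r0 : 0 < r by rewrite /r divr_gt0 //; lra.
  have r1 : r <= 1 by rewrite /r ler_pdivrMr //; lra.
  have rs : r * s <= - u.
    rewrite /r mulrAC ler_pdivrMr // mulrC; nra.
  have := key r (ltW r0) r1; nra.
have -> : x - b = (p - b) + (x - p) by apply/rowP => i; rewrite !mxE; ring.
rewrite sqD -/u -/s; lra.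
Qed.
End Eucl.

Lemma closed_pre (S T : topologicalType) (f : S -> T) (B : set T) :
  continuous f -> closed B -> closed (f @^-1` B).
Proof. by move=> /continuous_closedP; apply. Qed.

Section Hull.
Variables (R : realType) (d m : nat) (w : 'I_m -> 'rV[R]_d) (A : pred 'I_m).
Local Notation V := 'rV[R]_d.

Definition simplex : set 'rV[R]_m := [set lam | (forall j, 0 <= lam ord0 j) /\
  (forall j, ~~ A j -> lam ord0 j = 0) /\ \sum_j lam ord0 j = 1].
Definition comb (lam : 'rV[R]_m) : V := \sum_j lam ord0 j *: w j.
Definition hull : set V := comb @` simplex.

Lemma comb_continuous : continuous comb.
Proof.
rewrite /comb; apply: continuous_big => [|j _].
  exact: add_continuous.
move=> x; apply: continuousZr_tmp; exact: coord_continuous.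
Qed.

Lemma simplex_closed : closed simplex.
Proof.
have -> : simplex = (\bigcap_(j in [set: 'I_m]) ((fun lam : 'rV[R]_m => lam ord0 j) @^-1` [set x | 0 <= x]))
   `&` (\bigcap_(j in [set j | ~~ A j]) ((fun lam : 'rV[R]_m => lam ord0 j) @^-1` [set x | x = 0]))
   `&` ((fun lam : 'rV[R]_m => \sum_j lam ord0 j) @^-1` [set x | x = 1]).
  apply/seteqP; split => lam /=.
    case=> h1 [h2 h3]; split; first split.
    - by move=> j _; exact: h1.
    - by move=> j; exact: h2.
    - exact: h3.
  case=> -[h1 h2] h3; split; last split.
  - by move=> j; exact: h1.
  - by move=> j; exact: h2.
  - exact: h3.
apply: closedI; [apply: closedI|].
- apply: closed_bigI => j _; apply: closed_pre; last exact: closed_ge.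
  exact: coord_continuous.
- apply: closed_bigI => j _; apply: closed_pre; last exact: closed_eq.
  exact: coord_continuous.
- apply: closed_pre; last exact: closed_eq.
  apply: continuous_big => [|j _]; first exact: add_continuous.
  exact: coord_continuous.
Qed.

Lemma simplex_compact : compact simplex.
Proof.
have Mc : compact [set v : 'rV[R]_m | forall i, (`[(0:R), 1]%classic) (v ord0 i)].
  by apply: (@rV_compact _ _ (fun=> `[(0:R), 1]%classic)) => _; exact: segment_compact.
apply: (subclosed_compact simplex_closed Mc).
move=> lam [h1 [h2 h3]] i /=; rewrite in_itv /= h1 /=.
rewrite -h3 (bigD1 i) //= lerDl; apply: sumr_ge0 => j _; exact: h1.
Qed.

Lemma hull_compact : compact hull.
Proof.
apply: continuous_compact; last exact: simplex_compact.
by move=> x; apply: continuous_subspaceT; exact: comb_continuous.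
Qed.

Lemma hull_closed : closed hull.
Proof. apply: compact_closed; [exact: norm_hausdorff|exact: hull_compact]. Qed.


Lemma comb_lin (t : R) l1 l2 : comb (t *: l1 + (1 - t) *: l2) = t *: comb l1 + (1 - t) *: comb l2.
Proof.
rewrite /comb !scaler_sumr -big_split; apply: eq_bigr => j _.
by rewrite !mxE /= !scalerA -scalerDl.
Qed.

Lemma hull_convex : convex_set hull.
Proof.
move=> x y t; rewrite !inE => -[l1 [p1 [q1 r1]] <-] [l2 [p2 [q2 r2]] <-].
have t0 : 0 <= t%:num by [].
have t1 : t%:num <= 1 by have := (le1 t).
change (hull (t%:num *: comb l1 + (1 - t%:num) *: comb l2)).
rewrite -comb_lin; exists (t%:num *: l1 + (1 - t%:num) *: l2) => //.
split; [|split].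
- by move=> j; rewrite !mxE addr_ge0 // mulr_ge0 // ?p1 ?p2 // subr_ge0.
- by move=> j Aj; rewrite !mxE q1 // q2 // !mulr0 addr0.
- rewrite (eq_bigr (fun j => t%:num * l1 ord0 j + (1 - t%:num) * l2 ord0 j)); last by move=> j _; rewrite !mxE.
  by rewrite big_split /= -!mulr_sumr r1 r2; ring.
Qed.

Lemma hull_mem j : A j -> hull (w j).
Proof.
move=> Aj; exists (\row_k (k == j)%:R); last first.
  rewrite /comb (bigD1 j) //= big1 ?addr0; first by rewrite mxE eqxx scale1r.
  by move=> k kj; rewrite mxE (negbTE kj) scale0r.
split; [|split].
- by move=> k; rewrite mxE ler0n.
- by move=> k Ak; rewrite mxE; case: eqP => // kj; move: Ak; rewrite kj Aj.
- rewrite (bigD1 j) //= big1 ?addr0; first by rewrite mxE eqxx.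
  by move=> k kj; rewrite mxE (negbTE kj).
Qed.

Lemma hull_sub (F : set V) : convex_set F -> (forall j, A j -> F (w j)) -> hull `<=` F.
Proof.
move=> cF hF x [lam [h0 [hA h1]] <-]; rewrite /comb.
have := @convex_comb_seq R d m F w (index_enum 'I_m) (fun j => lam ord0 j) cF h0 h1.
apply => j _ lj; apply: hF; apply/negPn/negP => nA; move: lj; by rewrite (hA j nA) eqxx.
Qed.

End Hull.

Lemma coordB_continuous (R : realType) d (b : 'rV[R]_d) (i : 'I_d) :
  continuous (fun y : 'rV[R]_d => y ord0 i - b ord0 i).
Proof. move=> y; apply: continuousB; [exact: coord_continuous|exact: cst_continuous]. Qed.

Lemma sq_continuous (R : realType) d (b : 'rV[R]_d) : continuous (fun x : 'rV[R]_d => sq (x - b)).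
Proof.
have -> : (fun x : 'rV[R]_d => sq (x - b)) = (fun x => \sum_(i < d) ((x ord0 i - b ord0 i) * (x ord0 i - b ord0 i))).
  by apply: funext => x; rewrite /sq; apply: eq_bigr => i _; rewrite !mxE expr2.
apply: continuous_big => [|i _]; first exact: add_continuous.
move=> x; have := continuousM (@coordB_continuous R d b i x) (@coordB_continuous R d b i x); exact.
Qed.

Lemma nearest_compact (R : realType) d (C : set 'rV[R]_d) b : C !=set0 -> compact C ->
  exists p, C p /\ forall y, C y -> sq (p - b) <= sq (y - b).
Proof.
move=> C0 cC.
have cs : {within C, continuous (fun x : 'rV[R]_d => sq (x - b))}.
  by apply: continuous_subspaceT => x; exact: (@sq_continuous R d b).
have [p Cp hp] := @compact_EVT_min _ R (fun x : 'rV[R]_d => sq (x - b)) C C0 cC cs.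
exists p; split; first by move: Cp; rewrite inE.
by move=> y Cy; apply: hp; rewrite inE.
Qed.

Lemma cball_sq (R : realType) d (q x : 'rV[R]_d) r : 0 <= r -> sq (x - q) <= r -> cball q (Num.sqrt r) x.
Proof. by move=> r0 h; rewrite /cball /= /enorm ler_sqrt. Qed.

Lemma sq_cball (R : realType) d (q x : 'rV[R]_d) : cball q 1 x -> sq (x - q) <= 1.
Proof. by rewrite /cball /= /enorm -{1}sqrtr1 ler_sqrt. Qed.

Section Main.
Variables (R : realType) (d n k : nat) (F : 'I_n -> set 'rV[R]_d) (b : 'rV[R]_d).
Hypotheses (k1 : (1 <= k)%N) (cF : forall i, convex_set (F i)).
Local Notation V := 'rV[R]_d.
Local Notation SS := {set 'I_n}.

Definition good (S : SS) : Prop := exists p, cball b 1 p /\ (forall i, i \in S -> F i p).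
Definition gk (S : SS) : bool := (#|S| == k) && `[< good S >].
Definition wf (S : SS) : V := xget 0 [set p | cball b 1 p /\ (forall i, i \in S -> F i p)].

Lemma wfP S : good S -> cball b 1 (wf S) /\ (forall i, i \in S -> F i (wf S)).
Proof. by move=> g; exact: (xgetPex 0 g). Qed.

Definition wv (j : 'I_#|{: SS}|) : V := wf (enum_val j).
Definition Ai (i : 'I_n) : pred 'I_#|{: SS}| := fun j => gk (enum_val j) && (i \in enum_val j).
Definition G i : set V := hull wv (Ai i).

Lemma G_sub i : G i `<=` F i.
Proof.
apply: hull_sub => // j /andP[/andP[_ /asboolP g] ij].
exact: (wfP g).2.
Qed.

Lemma G_wit S i : gk S -> i \in S -> G i (wf S).
Proof.
move=> gS iS; rewrite /G.
have -> : wf S = wv (enum_rank S) by rewrite /wv enum_rankK.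
by apply: hull_mem; rewrite /Ai enum_rankK gS iS.
Qed.

Definition CT (T : SS) : set V := \bigcap_(i in [set i | i \in T]) G i.

Lemma CT_convex T : convex_set (CT T).
Proof.
move=> x y l; rewrite !inE => Cx Cy i Ti.
have := @hull_convex R d _ wv (Ai i) x y l; rewrite !inE; apply; [exact: Cx|exact: Cy].
Qed.

Lemma CT_closed T : closed (CT T).
Proof. apply: closed_bigI => i _; exact: hull_closed. Qed.

Lemma CT_sub (T S : SS) : T \subset S -> CT S `<=` CT T.
Proof. by move=> /fintype.subsetP TS x Sx i /= Ti; apply: Sx; apply: TS. Qed.

Lemma CT_G (T : SS) i : i \in T -> CT T `<=` G i.
Proof. by move=> iT x; apply. Qed.

Lemma CT0 x : CT (finset.set0 : SS) x.
Proof. by move=> i /=; rewrite inE. Qed.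

Lemma CT_wit S : gk S -> CT S (wf S).
Proof. by move=> gS i /= iS; exact: G_wit. Qed.

Definition feas (T : SS) : Prop := CT T !=set0.

Definition isnear (T : SS) (p : V) : Prop := CT T p /\ forall y, CT T y -> sq (p - b) <= sq (y - b).

Lemma near_ex T : feas T -> exists p, isnear T p.
Proof.
move=> fT; have [->|[i iT]] := set_0Vmem T.
  exists b; split; first exact: CT0.
  by move=> y _; rewrite subrr /sq big1 ?sq_ge0 // => i _; rewrite mxE expr0n.
apply: nearest_compact; first exact: fT.
have hc := @hull_compact R d _ wv (Ai i).
have cc : closed (CT T) by exact: CT_closed.
have := @subclosed_compact _ (CT T) (G i) cc hc (CT_G iT).
exact.
Qed.

Definition near (T : SS) : V := xget b (isnear T).
Definition H (T : SS) : R := sq (near T - b).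

Lemma nearP T : feas T -> isnear T (near T).
Proof. by move=> /near_ex h; exact: xgetPex. Qed.

Lemma H0 : H (finset.set0 : SS) = 0.
Proof.
have [_ h] := nearP (ex_intro _ b (CT0 b)).
apply/eqP; rewrite eq_le sq_ge0 andbT.
have h0 : sq (b - b) = 0 by rewrite subrr /sq big1 // => i _; rewrite mxE expr0n.
by rewrite /H; apply: le_trans (h b (CT0 b)) _; rewrite h0.
Qed.

Lemma feas_sub (T S : SS) : T \subset S -> feas S -> feas T.
Proof. by move=> TS [x Sx]; exists x; exact: CT_sub Sx. Qed.

Lemma H_le (T S : SS) : T \subset S -> feas S -> H T <= H S.
Proof.
move=> TS fS; have [CS _] := nearP fS.
have [_ hT] := nearP (feas_sub TS fS).
exact: hT _ (CT_sub TS CS).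
Qed.

Lemma gk_feas S : gk S -> feas S.
Proof. by move=> gS; exists (wf S); exact: CT_wit. Qed.

Lemma H_le1 S : gk S -> H S <= 1.
Proof.
move=> gS; have [_ h] := nearP (gk_feas gS).
apply: le_trans (h _ (CT_wit gS)) _.
have /andP[_ /asboolP g] := gS.
exact: sq_cball (wfP g).1.
Qed.

Definition small (T : SS) (x : 'I_n) : bool :=
  (x \notin T) && `[< feas (x |: T) /\ H (x |: T) - H T <= k%:R^-1 >].

Definition Nq (q : V) : nat :=
  #|[pred i : 'I_n | `[< exists x, F i x /\ cball q (Num.sqrt (k%:R^-1)) x >]]|.

Definition NT T := Nq (near T).

Lemma small_close T x : small T x -> exists y, F x y /\ cball (near T) (Num.sqrt (k%:R^-1)) y.
Proof.
move=> /andP[xT /asboolP[fxT hH]].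
have sub : T \subset x |: T by apply/fintype.subsetP => y yT; rewrite in_setU1 yT orbT.
have [Cx _] := nearP fxT.
have fT := feas_sub sub fxT.
exists (near (x |: T)); split.
  by apply: G_sub; apply: (CT_G _ Cx); rewrite in_setU1 eqxx.
apply: cball_sq; first by rewrite invr_ge0 ler0n.
have [CTn hn] := nearP fT.
apply: le_trans (proj_ineq (@CT_convex T) CTn (CT_sub sub Cx) hn) _.
exact: hH.
Qed.

Lemma in_close T x : feas T -> x \in T -> exists y, F x y /\ cball (near T) (Num.sqrt (k%:R^-1)) y.
Proof.
move=> fT xT; have [CTn _] := nearP fT.
exists (near T); split; first by apply: G_sub; exact: CT_G CTn.
apply: cball_sq; first by rewrite invr_ge0 ler0n.
by rewrite subrr /sq big1 ?invr_ge0 ?ler0n // => i _; rewrite mxE expr0n.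
Qed.

Lemma count_small T : feas T -> (#|T| + #|[pred x | small T x]| <= NT T)%N.
Proof.
move=> fT.
have dis : [predI T & [pred x | small T x]] =i pred0.
  by move=> x; rewrite !inE /small; case: (x \in T).
rewrite -cardUI (eq_card0 dis) addn0.
apply: subset_leq_card; apply/fintype.subsetP => x; rewrite !inE => /orP[xT|sx].
  exact: in_close fT xT.
exact: small_close.
Qed.

End Main.

Lemma tele (R : realType) (f : nat -> R) (c : R) m :
  (forall j, (j < m)%N -> c < f j.+1 - f j) -> (0 < m)%N -> m%:R * c < f m - f 0.
Proof.
elim: m => [//|m IH] h _.
have hm := h m (ltnSn m).
case: m IH h hm => [|m] IH h hm; first by rewrite mul1r.
have := IH (fun j jm => h j (leq_trans jm (leqnSn _))) isT.
rewrite -[(m.+2)%:R]natr1 mulrDl mul1r => h2; lra.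
Qed.

Lemma rcons_split (T : Type) (s : seq T) x s1 y s2 : rcons s x = s1 ++ y :: s2 ->
  (s1 = s /\ y = x) \/ (exists s2', s = s1 ++ y :: s2').
Proof.
case/lastP: s2 => [|s2' z].
  by rewrite cats1 => /rcons_inj [-> ->]; left.
rewrite -rcons_cons -rcons_cat => /rcons_inj [-> _]; right; by exists s2'.
Qed.

Section Count.
Variables (R : realType) (d n k : nat) (F : 'I_n -> set 'rV[R]_d) (b : 'rV[R]_d).
Hypotheses (k1 : (1 <= k)%N) (cF : forall i, convex_set (F i)).
Local Notation SS := {set 'I_n}.
Local Notation small := (@small R d n k F b).
Local Notation gk := (@gk R d n k F b).
Local Notation H := (@H R d n k F b).
Local Notation feas := (@feas R d n k F b).

Lemma set_rcons (s : seq 'I_n) x : [set y in rcons s x] = x |: [set y in s].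
Proof. by apply/setP => y; rewrite !inE mem_rcons inE. Qed.

Lemma chain_small s : uniq s -> size s = k -> gk [set y in s] ->
  exists s1 x s2, s = s1 ++ x :: s2 /\ small [set y in s1] x.
Proof.
move=> us sk gS.
have x0 : 'I_n by case: s us sk gS => [|a s'] //= _ sk; move: k1; rewrite -sk.
case: (boolP [exists j : 'I_k, small [set y in take j s] (nth x0 s j)]).
  case/existsP => j sj; exists (take j s), (nth x0 s j), (drop j.+1 s); split => //.
  by rewrite -drop_nth ?cat_take_drop // sk.
rewrite negb_exists => /forallP hns.
pose f j := H [set y in take j s].
have hinc : forall j, (j < k)%N -> k%:R^-1 < f j.+1 - f j.
  move=> j jk; have := hns (Ordinal jk) => /=.
  have e : s = take j s ++ nth x0 s j :: drop j.+1 s by rewrite -drop_nth ?cat_take_drop // sk.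
  have xT : nth x0 s j \notin [set y in take j s].
    by move: us; rewrite {1}e cat_uniq /= => /and3P[_ + _]; rewrite inE negb_or => /andP[+ _].
  have tn : [set y in take j.+1 s] = nth x0 s j |: [set y in take j s].
    by rewrite (take_nth x0) ?sk // set_rcons.
  have fs : feas (nth x0 s j |: [set y in take j s]).
    apply: (@feas_sub R d n k F b _ [set y in s]); last exact: gk_feas.
    by rewrite -tn; apply/fintype.subsetP => y; rewrite !inE; exact: mem_take.
  rewrite /small xT /= => /asboolPn h; rewrite /f tn ltNge; apply/negP => hle.
  by apply: h; split.
have := tele hinc k1.
rewrite /f take0 take_oversize ?sk //.
have -> : [set y in [::]] = (finset.set0 : SS) by apply/setP => y; rewrite !inE.
rewrite H0 subr0 mulfV ?pnatr_eq0 -?lt0n //.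
have := H_le1 gS; lra.
Qed.


Definition ok (T : SS) x := (x \notin T) && ~~ small T x.
Definition bad (S : SS) := (#|S| == k) && ~~ `[< good F b S >].

Fixpoint cnt (j : nat) (s : seq 'I_n) : nat :=
  if j is j'.+1 then \sum_(x | ok [set y in s] x) cnt j' (rcons s x) else 1%N.

Definition Pch (s : seq 'I_n) : Prop :=
  uniq s /\ forall s1 x s2, s = s1 ++ x :: s2 -> ok [set y in s1] x.

Lemma Pch_rcons s x : Pch s -> ok [set y in s] x -> Pch (rcons s x).
Proof.
move=> [us hs] okx; split.
  by rewrite rcons_uniq us andbT; move: okx => /andP[]; rewrite inE.
move=> s1 y s2 e; case: (rcons_split e) => [[-> ->] //|[s2' e']]; exact: hs e'.
Qed.

Lemma Pch_bad s : Pch s -> size s = k -> bad [set y in s].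
Proof.
move=> [us hs] sk; rewrite /bad cardsE (card_uniqP us) sk eqxx /=.
apply/negP => /asboolP g.
have gS : gk [set y in s] by rewrite /gk cardsE (card_uniqP us) sk eqxx; apply/asboolP.
have [s1 [x [s2 [e sm]]]] := chain_small us sk gS.
by have := hs _ _ _ e; rewrite /ok sm andbF.
Qed.

Lemma sum_split (T : SS) j : (#|T| + j.+1 = k)%N ->
  (\sum_(x | x \notin T) #|[pred S : SS | (x |: T \subset S) && bad S]| =
   j.+1 * #|[pred S : SS | (T \subset S) && bad S]|)%N.
Proof.
move=> Tk.
under eq_bigr do rewrite -sum1_card.
rewrite (exchange_big_dep (fun S : SS => (T \subset S) && bad S)) /=; last first.
  by move=> x S _; rewrite !inE finset.subUset => /andP[/andP[_ ->] ->].
rewrite mulnC -sum_nat_const; apply: eq_bigr => S /andP[TS bS].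
rewrite sum1_card.
rewrite (@eq_card _ _ (S :\: T)); last first.
  by move=> x; rewrite finset.in_setD -topredE /= inE /= finset.subUset finset.sub1set TS bS !andbT.
rewrite cardsD (finset.setIidPr TS).
by move: bS => /andP[/eqP -> _]; lia.
Qed.

Lemma cnt_upper j s : (size s + j = k)%N -> Pch s ->
  (cnt j s <= j`! * #|[pred S : SS | ([set y in s] \subset S) && bad S]|)%N.
Proof.
elim: j s => [|j IH] s sk Ps /=.
  rewrite mul1n; apply/card_gt0P; exists [set y in s]; rewrite inE subxx /=.
  by apply: Pch_bad; rewrite // -sk addn0.
apply: (@leq_trans (\sum_(x | ok [set y in s] x) (j`! * #|[pred S : SS | ([set y in rcons s x] \subset S) && bad S]|))).
  apply: leq_sum => x hx; apply: IH; last exact: Pch_rcons.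
  by rewrite size_rcons addSnnS.
apply: (@leq_trans (\sum_(x | x \notin [set y in s]) (j`! * #|[pred S : SS | (x |: [set y in s] \subset S) && bad S]|))).
  rewrite big_mkcond [X in (_ <= X)%N]big_mkcond /=; apply: leq_sum => x _.
  rewrite set_rcons /ok; case: (x \notin _) => //=; by case: (small _ _).
rewrite -big_distrr /= (sum_split (j:=j)); first by rewrite factS mulnCA mulnA.
by move: Ps => [us _]; rewrite cardsE (card_uniqP us) -sk addnS.
Qed.


Section Lower.
Variable M : nat.
Hypotheses (hM : forall T, feas T -> (@NT R d n k F b T <= M)%N) (Mk : (k <= M)%N).

Lemma ok_card (T : SS) : (#|T| < k)%N -> (n - M <= #|[pred x | ok T x]|)%N.
Proof.
move=> Tk.
have hC := cardC T; rewrite card_ord in hC.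
have hID := cardID [pred x | small T x] [predC T].
have e1 : #|[predD [predC T] & [pred x | small T x]]| = #|[pred x | ok T x]|.
  by apply: eq_card => x; rewrite !inE /ok andbC.
have hs : (#|[predI [predC T] & [pred x | small T x]]| <= #|[pred x | small T x]|)%N.
  by apply: subset_leq_card; apply/fintype.subsetP => x; rewrite !inE => /andP[].
have c1 : feas T -> (#|T| + #|[pred x | small T x]| <= M)%N.
  by move=> fT; exact: leq_trans (count_small cF fT) (hM fT).
have z : ~ feas T -> #|[pred x | small T x]| = 0%N.
  move=> fT; apply: eq_card0 => x; rewrite !inE /small; apply/negP => /andP[_ /asboolP [fx _]].
  apply: fT; apply: (feas_sub _ fx); apply/fintype.subsetP => y yT.
  by rewrite in_setU1 yT orbT.
move: hC hID e1 hs c1 z Tk.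
set t := #|T|. set sm := #|[pred x | small T x]|. set o := #|[pred x | ok T x]|.
set c := #|[predC T]|. set i := #|[predI [predC T] & [pred x | small T x]]|.
set dd := #|[predD [predC T] & [pred x | small T x]]|.
move=> hC hID e1 hs c1 z Tk.
case: (pselect (feas T)) => fT.
  have := c1 fT; lia.
have := z fT; lia.
Qed.

Lemma cnt_lower j s : (size s + j <= k)%N -> ((n - M) ^ j <= cnt j s)%N.
Proof.
elim: j s => [|j IH] s sk /=; first by rewrite expn0.
apply: (@leq_trans (\sum_(x | ok [set y in s] x) (n - M) ^ j)).
  rewrite (eq_bigl (fun x => x \in [pred x | ok [set y in s] x])) // sum_nat_const expnS.
  apply: leq_mul => //; apply: ok_card.
  rewrite cardsE (leq_ltn_trans (card_size s)) //.
  by apply: leq_trans sk; rewrite addnS ltnS leq_addr.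
by apply: leq_sum => x _; apply: IH; rewrite size_rcons addSnnS.
Qed.

End Lower.

End Count.

Unset Implicit Arguments.

Theorem theorem4p4 (R : realType) (d n k : nat) (alpha : R)
  (F : 'I_n -> set 'rV[R]_d) (b : 'rV[R]_d) :
  0 < alpha -> alpha <= 1 -> (1 <= k)%N ->
  injective F -> (forall i, convex_set (F i)) -> (k <= n)%N ->
  alpha * ('C(n, k))%:R <=
    (#|[pred S : {set 'I_n} | (#|S| == k) &&
        `[< exists p, cball b 1 p /\ (forall i, i \in S -> F i p) >]]|)%:R ->
  exists q : 'rV[R]_d,
    (1 - powR (1 - alpha) (k%:R)^-1) * n%:R <=
    (#|[pred i : 'I_n | `[< exists x, F i x /\ cball q (Num.sqrt (k%:R^-1)) x >]]|)%:R.
Proof.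
move=> a0 a1 k1 injF cF kn hyp.
have eG : #|[pred S : {set 'I_n} | (#|S| == k) &&
        `[< exists p, cball b 1 p /\ (forall i, i \in S -> F i p) >]]| =
        #|[pred S | @gk R d n k F b S]| by apply: eq_card.
rewrite eG in hyp.
set G := #|[pred S | @gk R d n k F b S]| in hyp.
have Cpos : (0 < 'C(n, k))%N by rewrite bin_gt0.
have [S gS] : exists S, @gk R d n k F b S.
  have : (0 < G)%N.
    rewrite lt0n; apply/eqP => e; move: hyp; rewrite e.
    have : 0 < alpha * ('C(n, k))%:R by rewrite mulr_gt0 // ltr0n.
    lra.
  by case/card_gt0P => S; rewrite inE => gS; exists S.
have f0 : @feas R d n k F b finset.set0 by exists b; exact: CT0.
case: (@arg_maxnP _ (finset.set0 : {set 'I_n}) (fun T => `[< @feas R d n k F b T >])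
   (@NT R d n k F b) (asboolT f0)) => Tm /asboolP fTm hTm.
set M := @NT R d n k F b Tm.
have hM : forall T, @feas R d n k F b T -> (@NT R d n k F b T <= M)%N.
  by move=> T fT; apply: hTm; apply: asboolT.
have Mk : (k <= M)%N.
  have hk : #|S| = k by move: gS => /andP[/eqP].
  have := count_small cF (gk_feas gS); rewrite hk => h.
  exact: leq_trans (leq_trans (leq_addr _ _) h) (hM _ (gk_feas gS)).
have Mn : (M <= n)%N.
  by rewrite /M /NT /Nq; apply: leq_trans (max_card _) _; rewrite card_ord.
have low := @cnt_lower R d n k F b k1 cF M hM Mk k [::] (leqnn _).
have Pn : Pch k F b [::] by split => // s1 x s2; case: s1.
have up := @cnt_upper R d n k F b k1 k [::] (erefl _) Pn.
have eB : #|[pred S0 : {set 'I_n} | [set y in [::]] \subset S0 & bad k F b S0]| =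
          #|[pred S0 : {set 'I_n} | bad k F b S0]|.
  apply: eq_card => S0; rewrite !inE.
  have -> : [set y in [::]] = (finset.set0 : {set 'I_n}) by apply/setP => y; rewrite !inE.
  by rewrite finset.sub0set.
rewrite eB in up.
have eC : (#|[pred S0 : {set 'I_n} | bad k F b S0]| + G)%N = 'C(n, k).
  have := card_draws 'I_n k; rewrite card_ord cardsE => <-.
  rewrite -(cardID [pred S0 | `[< good F b S0 >]] [pred S0 : {set 'I_n} | #|S0| == k]) addnC.
  congr (_ + _)%N; apply: eq_card => S0; rewrite !inE /bad /gk //=.
  by rewrite andbC.
have hbf : ('C(n, k) * k`!)%N = n ^_ k by rewrite bin_ffact.
have hff : (n ^_ k <= n ^ k)%N.
  have -> : (n ^ k = \prod_(i < k) n)%N by rewrite prod_nat_const card_ord.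
  rewrite ffact_prod.
  by apply: leq_prod => i _; rewrite leq_subr.
have hnat : ((n - M) ^ k + k`! * G <= n ^_ k)%N.
  rewrite -hbf -eC mulnDl [(G * _)%N]mulnC leq_add2r mulnC.
  exact: leq_trans low up.
exists (near k F b Tm).
change ((1 - powR (1 - alpha) k%:R^-1) * n%:R <= M%:R).
have n0 : (0 < n)%N by exact: leq_trans k1 kn.
have Npos : 0 < n%:R :> R by rewrite ltr0n.
have hR : ((n - M)%:R) ^+ k + (k`!)%:R * G%:R <= (n ^_ k)%:R :> R.
  by rewrite -natrX -natrM -natrD ler_nat.
have hC' : (n ^_ k)%:R = ('C(n, k))%:R * (k`!)%:R :> R by rewrite -natrM hbf.
have hN : (n ^_ k)%:R <= n%:R ^+ k :> R by rewrite -natrX ler_nat.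
set X := ((n - M)%:R : R).
have eX : X = n%:R - M%:R by rewrite /X natrB.
have X0 : 0 <= X by rewrite /X ler0n.
have fpos : 0 < (k`!)%:R :> R by rewrite ltr0n fact_gt0.
have hX : X ^+ k <= (1 - alpha) * n%:R ^+ k.
  apply: le_trans (_ : _ <= (1 - alpha) * (n ^_ k)%:R) _; last first.
    by apply: ler_wpM2l => //; lra.
  have h2 : (k`!)%:R * (alpha * ('C(n, k))%:R) <= (k`!)%:R * G%:R :> R.
    by rewrite ler_pM2l.
  move: hR; rewrite hC' => hR; nra.
have hA : (X / n%:R) ^+ k <= 1 - alpha.
  by rewrite expr_div_n ler_pdivrMr ?exprn_gt0.
have ha : X / n%:R <= powR (1 - alpha) k%:R^-1.
  have XN : 0 <= X / n%:R by rewrite divr_ge0 // ler0n.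
  have e : X / n%:R = powR ((X / n%:R) ^+ k) k%:R^-1.
    rewrite -powR_mulrn // -powRrM mulfV ?pnatr_eq0 -?lt0n // powRr1 //.
  rewrite e; apply: ge0_ler_powR => //.
  all: rewrite ?nnegrE ?invr_ge0 ?ler0n ?exprn_ge0 ?subr_ge0 //.
move: ha; rewrite ler_pdivrMr // eX; lra.
Qed.
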